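(* Let $G$ be a connected outerplanar graph given with an outerplanar (all vertices on the outer face) planar embedding, and let a new edge $(p,q)$ between two existing vertices arrive in the ordered streaming model, i.e., together with its position in the clockwise order of edges around $p$ and around $q$, such that the resulting graph is outerplanar. If at least one of $p,q$ has degree greater than $1$ in $G$, then this information about the relative order of incident edges determines the embedding of the new edge uniquely: there is only one way to draw $(p,q)$ consistent with the given edge orders so that the resulting drawing is planar with all vertices on the outer face.
   Context: A graph is outerplanar if it has a planar drawing in which every vertex lies on the outer face. In the ordered streaming model, each new edge comes with its position in the clockwise cyclic order of edges incident to each of its endpoints. *)

(* Defs.v *)
From mathcomp Require Import all_boot.
Set Implicit Arguments. Unset Strict Implicit. Unset Printing Implicit Defensive.

Section Embeddings.
Variable V : finType.

Definition simple_graph (g : rel V) : Prop :=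
  (forall u v, g u v = g v u) /\ (forall u, ~~ g u u).

Definition connected_graph (g : rel V) : Prop := forall x y, connect g x y.

Definition degree (g : rel V) (u : V) : nat := #|[set v | g u v]|.

Definition darts (g : rel V) : {set V * V} := [set d | g d.1 d.2].

(* A rotation system: rot u v is the neighbour following v in the clockwise
   cyclic order of the neighbours of u; rot u must be a cyclic permutation of
   the neighbourhood of u. *)
Definition rotation_system (g : rel V) (rot : V -> V -> V) : Prop :=
  [/\ (forall u v, g u v -> g u (rot u v)),
      (forall u v w, g u v -> g u w -> rot u v = rot u w -> v = w)
    & (forall u v w, g u v -> g u w -> exists n, iter n (rot u) v = w)].

(* face-tracing permutation on darts and the faces (its orbits) *)
Definition face_step (rot : V -> V -> V) (d : V * V) : V * V :=
  (d.2, rot d.2 d.1).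

Definition face (rot : V -> V -> V) (d : V * V) : {set V * V} :=
  [set x | fconnect (face_step rot) d x].

Definition num_faces (g : rel V) (rot : V -> V -> V) : nat :=
  #|[set face rot d | d in darts g]|.

(* genus 0 (Euler's formula V - E + F = 2 for connected graphs) *)
Definition planar_rotation (g : rel V) (rot : V -> V -> V) : Prop :=
  #|V| + num_faces g rot = (#|darts g| %/ 2) + 2.

Definition outerplanar_embedding (g : rel V) (rot : V -> V -> V)
    (F : {set V * V}) : Prop :=
  [/\ rotation_system g rot, planar_rotation g rot,
      (exists2 d, d \in darts g & F = face rot d)
    & (forall x, exists y, (x, y) \in F)].

Definition add_edge (g : rel V) (p q : V) : rel V :=
  fun u v => [|| g u v, (u == p) && (v == q) | (u == q) && (v == p)].

(* rot' (a rotation of G + pq) restricts to rot on G, with the new edge pq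
   inserted immediately after edge pa (clockwise) at p and immediately after
   edge qb at q. *)
Definition inserted_rotation (g : rel V) (rot rot' : V -> V -> V)
    (p q a b : V) : Prop :=
  [/\ (forall u v, g u v ->
         rot' u v = if (u == p) && (v == a) then q
                    else if (u == q) && (v == b) then p else rot u v),
      rot' p q = rot p a
    & rot' q p = rot q b].

End Embeddings.

(* Main.v *)
Require Import Defs.
From mathcomp Require Import all_boot zify.
Set Implicit Arguments. Unset Strict Implicit. Unset Printing Implicit Defensive.

Section Gen.
Variable T : finType.

Lemma iter_eq_in (f g : T -> T) (D : pred T) x :
  {in D, forall y, f y = g y} -> {in D, forall y, f y \in D} -> x \in D ->
  forall n, iter n f x = iter n g x /\ iter n f x \in D.
Proof.
move=> Efg Df Dx; elim=> [|n [IH1 IH2]] //=.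
by split; [rewrite -IH1 Efg | exact: Df].
Qed.

Lemma fconnect_in (f g : T -> T) (D : pred T) x y :
  {in D, forall y, f y = g y} -> {in D, forall y, f y \in D} -> x \in D ->
  fconnect f x y -> fconnect g x y /\ y \in D.
Proof.
move=> Efg Df Dx /iter_findex <-.
have [-> ->] := iter_eq_in Efg Df Dx (findex f x y).
by split=> //; apply: fconnect_iter.
Qed.

Lemma fconnect_eq (f g : T -> T) (D : pred T) x :
  {in D, forall y, f y = g y} -> {in D, forall y, f y \in D} -> x \in D ->
  fconnect f x =1 fconnect g x.
Proof.
move=> Efg Df Dx y; apply/idP/idP => H.
  by case: (fconnect_in Efg Df Dx H).
have Efg' : {in D, forall y, g y = f y} by move=> z Dz; rewrite Efg.
have Dg : {in D, forall y, g y \in D} by move=> z Dz; rewrite -Efg ?Df.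
by case: (fconnect_in Efg' Dg Dx H).
Qed.
End Gen.

Section Faces.
Variables (V : finType) (h : rel V) (R : V -> V -> V).
Hypotheses (hsym : forall u v, h u v = h v u) (hirr : forall u, ~~ h u u)
  (Hrot : rotation_system h R).

Lemma step_dart d : d \in darts h -> face_step R d \in darts h.
Proof.
case: Hrot => H1 _ _; rewrite !inE /face_step /= => hd.
by apply: H1; rewrite hsym.
Qed.

Definition sp d := if d \in darts h then face_step R d else d.

Lemma sp_inj : injective sp.
Proof.
case: Hrot => _ H2 _.
move=> [x1 x2] [y1 y2]; rewrite /sp.
case Dx: ((x1, x2) \in darts h); case Dy: ((y1, y2) \in darts h).
- rewrite /face_step /= => -[E1 E2]; subst y2.
  rewrite !inE /= in Dx Dy.
  by rewrite (H2 x2 x1 y1) // hsym.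
- move=> E; have := step_dart Dx; by rewrite E Dy.
- move=> E; have := step_dart Dy; by rewrite -E Dx.
- by [].
Qed.

Lemma face_sp d : d \in darts h ->
  face R d = [set y in darts h | fconnect sp d y].
Proof.
move=> Dd; apply/setP => y; rewrite !inE.
have E : {in darts h, forall z, face_step R z = sp z}
  by move=> z Dz; rewrite /sp Dz.
have Ds : {in darts h, forall z, face_step R z \in darts h}
  by move=> z Dz; apply: step_dart.
rewrite (fconnect_eq E Ds Dd).
apply/idP/idP => [H|/andP[]//].
rewrite H andbT.
have E' : {in darts h, forall z, sp z = sp z} by [].
have Ds' : {in darts h, forall z, sp z \in darts h}
  by move=> z Dz; rewrite -E ?Ds.
by case: (fconnect_in E' Ds' Dd H) => _; rewrite inE.
Qed.

Lemma fsp_equiv : {in darts h & &, equivalence_rel (fconnect sp)}.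
Proof.
move=> x y z _ _ _; split; first exact: connect0.
move=> Hxy; apply/idP/idP => H.
  by apply: connect_trans _ H; rewrite (fconnect_sym sp_inj).
exact: connect_trans Hxy H.
Qed.

Definition faces := [set face R d | d in darts h].

Lemma faces_part : partition faces (darts h).
Proof.
have -> : faces = equivalence_partition (fconnect sp) (darts h).
  by apply: eq_in_imset => d Dd; rewrite face_sp.
exact: equivalence_partitionP fsp_equiv.
Qed.

Lemma card_darts_sum : #|darts h| = \sum_(X in faces) #|X|.
Proof. exact: card_partition faces_part. Qed.

Lemma face_in d : d \in face R d.
Proof. by rewrite inE; apply: connect0. Qed.

Lemma darts_even : ~~ odd #|darts h|.
Proof.
pose r := fun d : V * V => (d.2, d.1).
have rK : involutive r by case.
pose A := [set d in darts h | enum_rank d.1 < enum_rank d.2].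
have -> : darts h = A :|: r @: A.
  apply/setP => [[x y]]; rewrite !inE /=.
  apply/idP/idP.
  - move=> hxy; case: (ltngtP (enum_rank x) (enum_rank y)) => Hr.
    + by rewrite hxy.
    + apply/orP; right; apply/imsetP; exists (y, x) => //.
      by rewrite !inE /= hsym hxy Hr.
    + have Exy := enum_rank_inj (val_inj Hr); subst y; by rewrite (negbTE (hirr x)) in hxy.
  - case/orP => [/andP[]//|/imsetP[[u v]]]; rewrite !inE /= => /andP[huv _] [-> ->].
    by rewrite hsym.
have -> : #|A :|: r @: A| = #|A| + #|r @: A|.
  rewrite -cardsUI.
  suff -> : A :&: r @: A = set0 by rewrite cards0 addn0.
  apply/setP => [[x y]]; rewrite !inE /=.
  apply/negP => /andP[/andP[_ H1] /imsetP[[u v]]]; rewrite !inE /= => /andP[_ H2] [Ex Ey].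
  subst; lia.
by rewrite card_imset; [rewrite addnn odd_double | exact: inv_inj].
Qed.

Lemma face_ge3 (conn : forall x y, connect h x y) (n3 : 2 < #|V|) d :
  d \in darts h -> 2 < #|face R d|.
Proof.
case: Hrot => H1 H2 H3.
case: d => u v; rewrite inE /= => huv.
have hvu : h v u by rewrite hsym.
set w := R v u.
have hvw : h v w by apply: H1.
have s1 : face_step R (u, v) = (v, w) by [].
set z := R w v.
have s2 : face_step R (v, w) = (w, z) by [].
have i1 : (v, w) \in face R (u, v) by rewrite inE -s1 (fconnect_iter _ 1).
have i2 : (w, z) \in face R (u, v).
  by rewrite inE -s2 -s1 (fconnect_iter _ 2).
have uv : u != v by apply: contraTneq huv => ->; apply: hirr.
have vw : v != w by apply: contraTneq hvw => ->; apply: hirr.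
have ne1 : (u, v) != (v, w) by apply/eqP => -[E _]; rewrite E eqxx in uv.
have ne2 : (v, w) != (w, z) by apply/eqP => -[E _]; rewrite E eqxx in vw.
case ne3 : ((u, v) == (w, z)).
  move/eqP: ne3 => [Eu Ev].
  have Nv : forall x, h v x -> x = u.
    move=> x /(H3 v u x hvu) [n <-]; elim: n => //= n ->; by rewrite -/w -Eu.
  have hwv : h w v by rewrite hsym.
  have Nu : forall x, h u x -> x = v.
    move=> x; rewrite Eu => /(H3 w v x hwv) [n <-].
    elim: n => //= n ->; by rewrite -/z -Ev.
  have [y Hy] : exists y, y \notin [set u; v].
    apply/existsP; rewrite -negb_forall; apply/negP => /forallP Hall.
    have : #|V| <= #|[set u; v]|.
      rewrite -cardsT; apply: subset_leq_card; apply/subsetP => x _; exact: Hall.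
    rewrite cards2; move: n3; case: (u != v) => /=; lia.
  have : connect h u y := conn u y.
  case/connectP => pth Hp Ey.
  have closed : forall x y, x \in [set u; v] -> h x y -> y \in [set u; v].
    move=> x y'; rewrite !inE => /orP[]/eqP-> hy.
      by rewrite (Nu y' hy) eqxx orbT.
    by rewrite (Nv y' hy) eqxx.
  suff H : forall x, x \in [set u; v] -> forall p0, path h x p0 -> last x p0 \in [set u; v].
    have Hu : u \in [set u; v] by rewrite !inE eqxx.
    by have := H u Hu pth Hp; rewrite -Ey (negbTE Hy).
  move=> x0 Hx0 p0; elim: p0 x0 Hx0 => [|x1 p1 IH] x0 Hx0 //= /andP[h01 Hp1].
  exact: IH (closed _ _ Hx0 h01) Hp1.
rewrite (cardD1 (u, v)) (cardD1 (v, w)) (cardD1 (w, z)) !inE connect0.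
move: i1 i2; rewrite !inE => -> ->; rewrite eq_sym ne1 eq_sym ne2 eq_sym ne3 /=; lia.
Qed.
End Faces.

Lemma arith (sm D f1 f2 s P n : nat) : D = f1 + (f2 + sm) -> s * 3 <= sm ->
  n <= f1 -> n <= f2 -> P = s + 2 -> n + P = D %/ 2 + 2 -> D = D %/ 2 * 2 ->
  s = 0 /\ f1 = n /\ f2 = n.
Proof. lia. Qed.
Lemma ar2 (k : nat) : true + k <= 2 -> k <= 1.
Proof. lia. Qed.
Lemma ar3 (k : nat) : true + 2 <= k -> 2 < k.
Proof. lia. Qed.

Theorem lemma1 (V : finType) (g : rel V) (rot : V -> V -> V) (F0 : {set V * V})
    (p q a b : V) :
  simple_graph g -> connected_graph g ->
  outerplanar_embedding g rot F0 ->
  p != q -> ~~ g p q ->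
  g p a -> g q b ->
  (1 < degree g p) || (1 < degree g q) ->
  (exists rot' F', outerplanar_embedding (add_edge g p q) rot' F' /\
                   inserted_rotation g rot rot' p q a b) ->
  forall rot1 F1 rot2 F2,
    outerplanar_embedding (add_edge g p q) rot1 F1 ->
    inserted_rotation g rot rot1 p q a b ->
    outerplanar_embedding (add_edge g p q) rot2 F2 ->
    inserted_rotation g rot rot2 p q a b ->
    (forall u v, add_edge g p q u v -> rot1 u v = rot2 u v) /\ F1 = F2.
Proof.
move=> [gsym girr] gconn _ pq npq gpa gqb hdeg _ rot1 F1 rot2 F2 O1 I1 O2 I2.
set h := add_edge g p q.
have hE : forall u v, h u v = [|| g u v, (u == p) && (v == q) | (u == q) && (v == p)] by [].
have hsym : forall u v, h u v = h v u.
  move=> u v; rewrite !hE gsym; by case: (u == p); case: (v == q); case: (u == q); case: (v == p); rewrite /= ?orbT ?orbF.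
have hirr : forall u, ~~ h u u.
  move=> u; rewrite hE (negbTE (girr u)) /=.
  by apply/negP => /orP[]/andP[/eqP-> /eqP E]; move: pq; rewrite E eqxx.
have gh : forall u v, g u v -> h u v by move=> u v guv; rewrite hE guv.
have Erot : forall u v, h u v -> rot1 u v = rot2 u v.
  case: I1 => A1 B1 C1; case: I2 => A2 B2 C2.
  move=> u v; rewrite hE => /orP[guv|/orP[]/andP[/eqP-> /eqP->]].
  - by rewrite A1 // A2.
  - by rewrite B1 B2.
  - by rewrite C1 C2.
split => //.
case: O1 => Rs1 Pl1 [d1 D1 EF1] Out1.
case: O2 => _ _ [d2 D2 EF2] Out2.
have EF2' : F2 = face rot1 d2.
  rewrite EF2; apply/setP => y; rewrite !inE.
  have E : {in darts h, forall z, face_step rot2 z = face_step rot1 z}.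
    by move=> [x1 x2]; rewrite inE /face_step /= => hx; rewrite Erot // hsym.
  have Ds : {in darts h, forall z, face_step rot2 z \in darts h}.
    by move=> z Dz; rewrite E //; apply: step_dart.
  exact: (fconnect_eq E Ds D2).
apply/eqP; apply/negPn/negP => neF.
set P := faces h rot1.
have F1P : F1 \in P by rewrite EF1; apply: imset_f.
have F2P : F2 \in P by rewrite EF2'; apply: imset_f.
have hconn : forall x y, connect h x y.
  move=> x y; apply: (connect_sub (e := g)) (gconn x y) => u v guv.
  by apply: connect1; apply: gh.
have n3 : 2 < #|V|.
  have ap : a != p by apply: contraTneq gpa => ->; apply: girr.
  have aq : a != q by apply/eqP => E; move: npq; rewrite -E gpa.
  have : #|a |: [set p; q]| <= #|V| by apply: max_card.
  rewrite cardsU1 cards2 !inE pq (negbTE ap) (negbTE aq) /=.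
  exact: ar3.
have ge3 : forall X : {set V * V}, X \in P -> 2 < #|X|.
  move=> X; rewrite /P /faces => /imsetP[d Dd ->]; exact: (face_ge3 hsym hirr Rs1 hconn n3 Dd).
have geN' : forall F : {set V * V}, (forall x, exists y, (x, y) \in F) -> #|V| <= #|fst @: F|.
  move=> F HF.
  rewrite -cardsT; apply: subset_leq_card; apply/subsetP => x _.
  by case: (HF x) => y Hy; apply/imsetP; exists (x, y).
have N1' := geN' _ Out1.
have N1 : #|V| <= #|F1| := leq_trans N1' (leq_imset_card fst F1).
have N2 : #|V| <= #|F2| := leq_trans (geN' _ Out2) (leq_imset_card fst F2).
have N2' := geN' _ Out2.
have Dsum := card_darts_sum hsym Rs1.
have F2P' : (F2 \in P) && (F2 != F1) by rewrite F2P eq_sym neF.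
rewrite (bigD1 F1 F1P) (bigD1 F2 F2P') /= in Dsum.
set S := [set X | (X \in P) && (X != F1) && (X != F2)].
set sm := (\sum_(i | _) _) in Dsum.
have Slow : #|S| * 3 <= sm.
  rewrite /sm -sum_nat_cond_const; apply: leq_sum => X /andP[/andP[XP _] _]; exact: ge3.
have cP : #|P| = #|S| + 2.
  rewrite (cardD1 F1 P) (cardD1 F2 [predD1 P & F1]) F1P !inE F2P eq_sym neF /=.
  rewrite add1n addSn -addn2; congr (_ + _); apply: eq_card => X; rewrite !inE.
  by case: (X \in P); case: (X == F1); case: (X == F2).
have Eu : #|V| + #|P| = #|darts h| %/ 2 + 2 := Pl1.
have Ev := darts_even hsym hirr.
have Dd := divn_eq #|darts h| 2; rewrite modn2 (negbTE Ev) addn0 in Dd.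
have [S0 [cF1 cF2]] : #|S| = 0 /\ #|F1| = #|V| /\ #|F2| = #|V|.
  have Dsum' : #|darts h| = #|F1| + (#|F2| + sm) by exact: Dsum.
  move: Dsum' Slow N1 N2 cP Eu Dd.
  exact: arith.
have inj1 : {in F1 &, injective fst}.
  apply/imset_injP; rewrite eqn_leq leq_imset_card /=; rewrite cF1; exact: N1'.
have inj2 : {in F2 &, injective fst}.
  apply/imset_injP; rewrite eqn_leq leq_imset_card /=; rewrite cF2; exact: N2'.
have inF : forall d, d \in darts h -> (d \in F1) || (d \in F2).
  move=> d Dq; have XP : face rot1 d \in P by apply: imset_f.
  have : face rot1 d \notin S by rewrite (cards0_eq S0) inE.
  rewrite !inE XP /= negb_and !negbK => /orP[]/eqP <-; rewrite face_in ?orbT //.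
have le1 : forall (x : V) (F : {set V * V}), {in F &, injective fst} ->
    #|[set d in darts h | d.1 == x] :&: F| <= 1.
  move=> x F injF; rewrite -(card_in_imset (f := fst)); last first.
    by move=> u v /setIP[_ Hu] /setIP[_ Hv]; apply: injF.
  rewrite -(cards1 x); apply: subset_leq_card; apply/subsetP => y /imsetP[d].
  by rewrite !inE => /andP[/andP[_ /eqP <-] _] ->.
have degle : forall x, #|[set v | h x v]| <= 2.
  move=> x; set Op := [set d in darts h | d.1 == x].
  have c1 : #|[set v | h x v]| <= #|Op|.
    apply: leq_trans (leq_imset_card snd Op); apply: subset_leq_card.
    apply/subsetP => v; rewrite inE => hv; apply/imsetP; exists (x, v) => //.
    by rewrite !inE hv eqxx.
  have c2 : #|Op| <= #|(Op :&: F1) :|: (Op :&: F2)|.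
    apply: subset_leq_card; apply/subsetP => d Hd.
    have := Hd; rewrite inE => /andP[Dq _].
    by apply/setUP; case/orP: (inF d Dq) => H; [left|right]; apply/setIP; split.
  apply: leq_trans c1 _; apply: leq_trans c2 _.
  apply: leq_trans (leq_card_setU _ _) _.
  exact: (leq_add (le1 x F1 inj1) (le1 x F2 inj2)).
have degg : forall x y, y != x -> ~~ g x y -> h x y -> degree g x <= 1.
  move=> x y yx ngxy hxy.
  have : #|y |: [set v | g x v]| <= 2.
    apply: leq_trans (degle x); apply: subset_leq_card; apply/subsetP => v.
    rewrite !inE => /orP[/eqP ->|gv] //; by rewrite hE gv.
  rewrite cardsU1 inE ngxy /degree; exact: ar2.
have dp : degree g p <= 1.
  apply: (degg p q); [by rewrite eq_sym | by [] | by rewrite hE !eqxx orbT].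
have dq : degree g q <= 1.
  apply: (degg q p); [by [] | by rewrite gsym | by rewrite hE !eqxx !orbT].
by move: hdeg; rewrite ltnNge dp ltnNge dq.
Qed.
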